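(* Let $\lambda \geq 2$ be an integer and let $H(\lambda)_1, \dots, H(\lambda)_{r(\lambda)}$ be all graphs on $\lambda^2+2$ vertices that have at least one isolated vertex. Then there exists a positive integer $p'(\lambda)$ such that for every $i = 1, \dots, r(\lambda)$, the graph obtained from $H(\lambda)_i$ by adding a complete graph $K_{p'(\lambda)}$ on $p'(\lambda)$ new vertices and joining every new vertex to every vertex of $H(\lambda)_i$ has smallest adjacency eigenvalue less than $-\lambda$.
   Context: The smallest eigenvalue of a graph refers to the smallest eigenvalue of its adjacency matrix. (In the paper's language this graph is $G(\mathfrak{q}(H(\lambda)_i), p'(\lambda))$: the Hoffman graph $\mathfrak{q}(H)$ with one fat vertex adjacent to all vertices of $H$, with the fat vertex replaced by a clique $K_p$.) *)

(* Defs.v *)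
From HB Require Import structures.
From mathcomp Require Import all_boot all_order all_algebra.
From mathcomp Require Import reals.
Set Implicit Arguments. Unset Strict Implicit. Unset Printing Implicit Defensive.
Import Order.TTheory GRing.Theory Num.Theory.
Local Open Scope ring_scope.

Definition simple_graph n (e : rel 'I_n) : Prop :=
  symmetric e /\ irreflexive e.

Definition isolated n (e : rel 'I_n) (v : 'I_n) : Prop :=
  forall u, ~~ e v u.

Definition adj_mx (R : pzRingType) n (e : rel 'I_n) : 'M[R]_n :=
  \matrix_(i, j) (e i j)%:R.

Definition join_clique n (p : nat) (e : rel 'I_n) : rel 'I_(n + p) :=
  fun i j =>
    match split i, split j with
    | inl a, inl b => e a b
    | inr a, inr b => a != b
    | _, _ => true
    end.

Definition smallest_eigenvalue (R : realType) n (A : 'M[R]_n) (theta : R) : Prop :=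
  eigenvalue A theta /\ forall mu, eigenvalue A mu -> theta <= mu.
Arguments join_clique {n} p e _ _.

(* Main.v *)
Require Import Defs.
From HB Require Import structures.
From mathcomp Require Import all_boot all_order all_algebra.
From mathcomp Require Import reals.
From mathcomp Require Import complex polyrcf.
From mathcomp.algebra_tactics Require Import ring lra.
Set Implicit Arguments. Unset Strict Implicit. Unset Printing Implicit Defensive.
Import Order.TTheory GRing.Theory Num.Theory.
Local Open Scope ring_scope.

Section Ray.
Local Open Scope sesquilinear_scope.
Variable R : rcfType.
Local Notation C := (R[i]).
Local Notation f := (real_complex R).

Lemma fconj (r : R) : (f r)^* = f r.
Proof. by apply: conj_Creal; apply/complex_realP; exists r. Qed.

Lemma eig_transfer n (A : 'M[R]_n) (r : R) :
  eigenvalue (map_mx f A) (f r) -> eigenvalue A r.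
Proof. by rewrite !eigenvalue_root_char -map_char_poly fmorph_root. Qed.

Lemma rayleigh n (A : 'M[R]_n) (x : 'rV[R]_n) (c : R) :
  A^T = A -> (x *m A *m x^T) 0 0 < c * (x *m x^T) 0 0 ->
  exists a, eigenvalue A a /\ a < c.
Proof.
move=> Asym hq.
pose Ac := map_mx f A.
have Aherm : Ac \is hermsymmx.
  apply/is_hermitianmxP; rewrite expr0 scale1r; apply/matrixP => i j.
  rewrite !mxE fconj -{1}Asym mxE //.
pose P := spectralmx Ac; pose d := spectral_diag Ac.
have /orthomx_spectralP AE := hermitian_normalmx Aherm.
have Pu := spectral_unitarymx Ac; have PU := spectral_unit Ac.
have dreal := hermitian_spectral_diag_real Aherm.
have dE j : d 0 j = f (complex.Re (d 0 j)).
  by rewrite RRe_real //; exact: (mxOverP dreal).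
have eigd j : eigenvalue A (complex.Re (d 0 j)).
  apply: eig_transfer; rewrite -dE; apply/eigenvalueP.
  exists (delta_mx 0 j *m P).
    rewrite -/Ac [in LHS]AE !mulmxA mulmxK //.
    rewrite mul_mx_diag scalemxAl; congr (_ *m _).
    apply/matrixP => a b; rewrite !mxE.
    by rewrite ord1 eqxx /=; case: (eqVneq b j) => [->|hb]; rewrite ?mulr1 ?mul1r ?mulr0 ?mul0r.
  apply/negP => /eqP h.
  have := congr1 (mulmx^~ (invmx P)) h; rewrite /= mul0mx.
  rewrite mulmxK // => /matrixP /(_ 0 j); rewrite !mxE !eqxx /= => /eqP.
  by rewrite oner_eq0.
case: (boolP [exists j, complex.Re (d 0 j) < c]) => [/existsP [j hj] | /existsPn hall].
  by exists (complex.Re (d 0 j)).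
exfalso.
have hc j : f c <= d 0 j by rewrite dE lecR leNgt; exact: hall.
pose xc := map_mx f x.
have xct : xc ^t* = map_mx f x^T.
  by apply/matrixP => a b; rewrite !mxE fconj.
have q1 : f ((x *m A *m x^T) 0 0) = (xc *m Ac *m xc ^t*) 0 0.
  by rewrite xct /xc /Ac -!map_mxM [RHS]mxE.
have q2 : f ((x *m x^T) 0 0) = (xc *m xc ^t*) 0 0.
  by rewrite xct /xc -!map_mxM [RHS]mxE.
pose y := xc *m P ^t*.
have yt : y ^t* = P *m xc ^t*.
  by rewrite /y trmx_mul map_mxM trmxCK.
have iP : invmx P = P ^t* by exact: invmx_unitary.
have e1 : xc *m Ac *m xc ^t* = y *m diag_mx d *m y ^t*.
  by rewrite yt /y [Ac]AE iP !mulmxA.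
have e2 : xc *m xc ^t* = y *m y ^t*.
  by rewrite yt /y -iP mulmxA -(mulmxA xc) mulVmx // mulmx1.
have : f (c * (x *m x^T) 0 0) <= f ((x *m A *m x^T) 0 0).
  rewrite (_ : f (c * _) = f c * f ((x *m x^T) 0 0)); last exact: rmorphM.
  clearbody y; rewrite q1 q2 e1 e2 !mxE mulr_sumr; apply: ler_sum => k _.
  rewrite mul_mx_diag !mxE (mulrC (f c)) -!mulrA mulrA [d 0 k * _]mulrC mulrA.
  by apply: ler_wpM2l; [exact: mul_conjC_ge0 | exact: hc].
by rewrite lecR leNgt hq.
Qed.
End Ray.

Definition testvec (R : pzRingType) m p (v : 'I_m) (al ga be : R) : 'rV[R]_(m + p) :=
  \row_i (match split i with inl a => if a == v then al else ga | inr _ => be end).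

Lemma quadE (R : comPzRingType) k (x : 'rV[R]_k) (A : 'M[R]_k) :
  (x *m A *m x^T) 0 0 = \sum_i \sum_j x 0 i * A i j * x 0 j.
Proof.
rewrite exchange_big /= [LHS]mxE; apply: eq_bigr => j _.
by rewrite !mxE mulr_suml.
Qed.
Lemma normE (R : comPzRingType) k (x : 'rV[R]_k) :
  (x *m x^T) 0 0 = \sum_i x 0 i ^+ 2.
Proof. rewrite [LHS]mxE; apply: eq_bigr => i _; by rewrite !mxE expr2. Qed.

Lemma sum_but (R : pzRingType) k (v : 'I_k) (a b : R) :
  \sum_i (if i == v then a else b) = a + k.-1%:R * b.
Proof.
rewrite (bigD1 v) //= eqxx; congr (_ + _).
rewrite (eq_bigr (fun _ => b)); last by move=> i /negbTE ->.
by rewrite sumr_const cardC1 card_ord mulr_natl.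
Qed.

Lemma sl m p (a : 'I_m) : split (lshift p a) = inl a.
Proof. exact: (unsplitK (inl a)). Qed.
Lemma sr m p (a : 'I_p) : split (rshift m a) = inr a.
Proof. exact: (unsplitK (inr a)). Qed.

Lemma key (R : realFieldType) m p (e : rel 'I_m) (v : 'I_m) (al ga be : R) :
  symmetric e -> isolated e v ->
  let x := testvec p v al ga be in
  (x *m adj_mx R (join_clique p e) *m x^T) 0 0 <=
     2 * (p%:R * be * (al + m.-1%:R * ga)) + be ^+ 2 * (p%:R * (p%:R - 1))
     + (m.-1%:R * ga) ^+ 2  /\
  (x *m x^T) 0 0 = al ^+ 2 + m.-1%:R * ga ^+ 2 + p%:R * be ^+ 2.
Proof.
move=> esym hv x; split; last first.
  rewrite normE big_split_ord /=; congr (_ + _).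
    rewrite (eq_bigr (fun a => if a == v then al ^+ 2 else ga ^+ 2)) ?sum_but //.
    by move=> a _; rewrite mxE sl; case: (a == v).
  rewrite (eq_bigr (fun _ => be ^+ 2)); last by move=> k _; rewrite mxE sr.
  by rewrite sumr_const card_ord mulr_natl.
have xl a : x 0 (lshift p a) = if a == v then al else ga by rewrite mxE sl.
have xr k : x 0 (rshift m k) = be by rewrite mxE sr.
rewrite quadE big_split_ord /=.
under eq_bigr do rewrite big_split_ord /=.
under [X in _ + X]eq_bigr do rewrite big_split_ord /=.
rewrite !big_split /=.
set HH := \sum_(i < m) \sum_(j < m) _.
set HK := \sum_(i < m) \sum_(j < p) _.
set KH := \sum_(i < p) \sum_(j < m) _.
set KK := \sum_(i < p) \sum_(j < p) _.
have eHK : HK = p%:R * be * (al + m.-1%:R * ga).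
  rewrite /HK (eq_bigr (fun a => if a == v then p%:R * be * al else p%:R * be * ga)).
    by rewrite sum_but; ring.
  move=> a _; rewrite (eq_bigr (fun _ => (if a == v then al else ga) * be)).
    by rewrite sumr_const card_ord mulr_natl; case: (a == v); ring.
  by move=> k _; rewrite xl xr !mxE /join_clique sl sr mulr1.
have eKH : KH = p%:R * be * (al + m.-1%:R * ga).
  rewrite /KH (eq_bigr (fun _ => be * (al + m.-1%:R * ga))).
    by rewrite sumr_const card_ord mulr_natl; ring.
  move=> k _; rewrite (eq_bigr (fun a => if a == v then be * al else be * ga)).
    by rewrite sum_but; ring.
  by move=> a _; rewrite xl xr !mxE /join_clique sl sr mulr1; case: (a == v).
have eKK : KK = be ^+ 2 * (p%:R * (p%:R - 1)).
  rewrite /KK (eq_bigr (fun _ => be ^+ 2 * (p%:R - 1))).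
    by rewrite sumr_const card_ord mulr_natl; ring.
  move=> k _; rewrite (eq_bigr (fun l => if l == k then 0 else be ^+ 2)).
    rewrite sum_but add0r mulrC; congr (_ * _).
    by rewrite -subn1 natrB // (leq_ltn_trans (leq0n k) (ltn_ord k)).
  by move=> l _; rewrite !xr !mxE /join_clique !sr eq_sym; case: (l == k); rewrite ?mulr0 ?mul0r ?mulr1 ?expr2.
have hHH : HH <= (m.-1%:R * ga) ^+ 2.
  have -> : (m.-1%:R * ga) ^+ 2 = \sum_(a < m) \sum_(b < m)
      ((if a == v then 0 else ga) * (if b == v then 0 else ga)).
    by rewrite -big_distrlr /= sum_but add0r expr2.
  apply: ler_sum => a _; apply: ler_sum => b _.
  rewrite !xl !mxE /join_clique !sl.
  case: (eqVneq a v) => [->|hav].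
    by rewrite (negbTE (hv b)) mulr0 !mul0r.
  case: (eqVneq b v) => [->|hbv].
    have -> : e a v = false by rewrite esym; exact: negbTE (hv a).
    by rewrite mulr0n !mulr0 mul0r.
  case: (e a b); rewrite ?mulr1 ?mulr0 ?mul0r //.
  by rewrite -expr2 sqr_ge0.
rewrite eHK eKH eKK.
move: hHH; set u := (m.-1%:R * ga) ^+ 2; set w := p%:R * be * (al + m.-1%:R * ga).
set z := be ^+ 2 * _.
by move=> h; lra.
Qed.

Lemma adj_sym (R : pzRingType) m p (e : rel 'I_m) :
  symmetric e -> (adj_mx R (join_clique p e))^T = adj_mx R (join_clique p e).
Proof.
move=> esym; apply/matrixP => i j; rewrite !mxE /join_clique.
case: (split i) => a; case: (split j) => b //.
  by rewrite esym.
by rewrite eq_sym.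
Qed.

Lemma seq_min (R : realDomainType) (s : seq R) a : a \in s ->
  exists2 m, m \in s & forall y, y \in s -> m <= y.
Proof.
elim: s a => [//|b s IH] a _.
case: s IH => [|c s'] IH.
  by exists b => [|y]; rewrite ?mem_head // inE => /eqP ->.
have [m ms hm] := IH c (mem_head c s').
case: (leP b m) => hbm.
  exists b; first exact: mem_head.
  move=> y; rewrite inE => /orP [/eqP -> //|hy].
  exact: le_trans hbm (hm _ hy).
exists m; first by rewrite inE ms orbT.
move=> y; rewrite inE => /orP [/eqP -> |hy]; last exact: hm.
exact: ltW.
Qed.

Lemma smallest_ray (R : realType) k (A : 'M[R]_k) (x : 'rV[R]_k) (c : R) :
  A^T = A -> (x *m A *m x^T) 0 0 < c * (x *m x^T) 0 0 ->
  exists theta, smallest_eigenvalue A theta /\ theta < c.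
Proof.
move=> Asym hq.
have [a [ha hac]] := rayleigh Asym hq.
have p0 : char_poly A != 0 := monic_neq0 (char_poly_monic A).
have ins mu : eigenvalue A mu -> mu \in rootsR (char_poly A).
  move=> h; rewrite -(roots_on_rootsR p0 mu) -eigenvalue_root_char h andbT.
  by rewrite in_itv.
have [m ms hm] := seq_min (ins a ha).
exists m; split; [split|].
- move: ms; rewrite -(roots_on_rootsR p0 m) => /andP [_].
  by rewrite eigenvalue_root_char.
- by move=> mu h; exact: hm _ (ins _ h).
- exact: le_lt_trans (hm _ (ins _ ha)) hac.
Qed.

Theorem mainTheorem4 (R : realType) (lambda : nat) (hl : (2 <= lambda)%N) :
  exists p : nat, (0 < p)%N /\
    forall e : rel 'I_(lambda ^ 2 + 2),
      simple_graph e -> (exists v, isolated e v) ->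
      exists theta : R,
        smallest_eigenvalue (adj_mx R (join_clique p e)) theta /\
        theta < - (lambda%:R).
Proof.
have hpos : (0 < lambda)%N := leq_trans (isT : (0 < 2)%N) hl.
exists (lambda ^ 3 + lambda ^ 2 + lambda)%N; split.
  by rewrite !addn_gt0 hpos !orbT.
move=> e [esym _] [v hv].
pose l : R := lambda%:R.
pose D : R := l * (l ^+ 2 + l + 1).
have [hq hT] := @key R _ (lambda ^ 3 + lambda ^ 2 + lambda)%N e v (D * (l ^+ 2 + l + 1)) (D * l) (- D) esym hv.
set x := testvec _ _ _ _ _ in hq hT.
apply: (@smallest_ray R _ _ x (- l)).
  exact: adj_sym.
apply: (le_lt_trans hq); rewrite hT.
have hm : ((lambda ^ 2 + 2).-1)%:R = l ^+ 2 + 1 :> R.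
  by rewrite addn2 /= -addn1 natrD natrX.
have hp : ((lambda ^ 3 + lambda ^ 2 + lambda)%N)%:R = l ^+ 3 + l ^+ 2 + l :> R.
  by rewrite !natrD !natrX.
rewrite hm hp -subr_gt0.
have l2 : 2 <= l by rewrite /l (ler_nat R 2 lambda).
have l0 : 0 < l by lra.
have D0 : 0 < D by rewrite /D mulr_gt0 // !addr_gt0 ?exprn_gt0 ?ltr01.
set lhs := (X in 0 < X).
have -> : lhs = 2 * D ^+ 2 * D by rewrite /lhs /D; ring.
by apply: mulr_gt0; [apply: mulr_gt0; [lra | exact: exprn_gt0] | exact: D0].
Qed.
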